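(* For every integer $n\ge 2$, the clique number of $D_n$ is $$Cl(D_n)=\tau(n)+\pi(n)-\omega(n)+\gamma_1(n).$$ In particular, if $n$ is prime, $Cl(D_n)=\pi(n)+1$.
   Context: $D_n$ is the graph with vertex set $\{1,\dots,n\}$ in which distinct $a,b$ are adjacent iff $\gcd(a,b)\mid n$ (the maximal Diophantine graph of order $n$). $Cl(G)$ is the maximum order of a complete subgraph of $G$. $\pi(x)$ is the number of primes $\le x$, $\omega(n)$ the number of distinct primes dividing $n$, $\tau(n)$ the number of positive divisors of $n$. For a prime $p$, $\acute v_p(n):=v_p(n)+1$ where $v_p$ is the $p$-adic valuation, and for real $0<x<n$, $\gamma_x(n):=\left|\{p^{\acute v_p(n)} : p \text{ prime},\ p\mid n,\ x<p^{\acute v_p(n)}<n\}\right|$. *)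

(* Defs.v *)
From mathcomp Require Import all_boot.
Set Implicit Arguments. Unset Strict Implicit. Unset Printing Implicit Defensive.

Definition Dadj (n a b : nat) : bool := gcdn a b %| n.

(* A clique of D_n: a set of vertices, represented inside 'I_n.+1 = {0..n},
   all of which lie in {1..n}, pairwise adjacent. *)
Definition DClique (n : nat) (S : {set 'I_n.+1}) : bool :=
  [forall a in S, (0 < val a) &&
     [forall b in S, (a != b) ==> Dadj n (val a) (val b)]].

Definition Cl (n : nat) : nat :=
  \max_(S : {set 'I_n.+1} | DClique S) #|S|.

Definition prime_pi (x : nat) : nat := count prime (iota 0 x.+1).

Definition omega (n : nat) : nat := size (primes n).

Definition tau (n : nat) : nat := size (divisors n).

Definition vacute (p n : nat) : nat := (logn p n).+1.

Definition gamma (x n : nat) : nat :=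
  size (undup [seq p ^ vacute p n |
                 p <- primes n & (x < p ^ vacute p n) && (p ^ vacute p n < n)]).

(* Main.v *)
Require Import Defs.
From mathcomp Require Import all_boot zify.

Lemma count_split (T : Type) (a b : pred T) s :
  count a s = count (fun x => a x && b x) s + count (fun x => a x && ~~ b x) s.
Proof. elim: s => //= x s ->; case: (a x); case: (b x) => /=; lia. Qed.

Lemma count_perm (T : eqType) (s : seq T) (P : pred T) : uniq s ->
  forall t, uniq t -> (forall x, (x \in s) = P x && (x \in t)) -> size s = count P t.
Proof.
move=> us t ut H; rewrite -size_filter; apply: perm_size; apply: uniq_perm => //.
  by rewrite filter_uniq.
by move=> x; rewrite mem_filter H.
Qed.

Lemma card_ordP m (P : pred nat) : #|[set x : 'I_m | P (val x)]| = count P (iota 0 m).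
Proof.
rewrite cardE (@count_perm _ _ (fun x : 'I_m => P (val x)) (enum_uniq _) _ (enum_uniq 'I_m)).
  by rewrite -val_enum_ord count_map.
by move=> x; rewrite mem_enum inE mem_enum andbT.
Qed.

Definition qq n p := p ^ (logn p n).+1.

Lemma qq_ndvd n p : prime p -> 0 < n -> ~~ (qq n p %| n).
Proof. by move=> pp n0; rewrite /qq pfactor_dvdn // ltnn. Qed.

Lemma qq_ge n p : prime p -> p <= qq n p.
Proof. move=> pp; rewrite /qq -{1}(expn1 p); apply: leq_pexp2l => //; exact: prime_gt0. Qed.

Lemma qq_gt0 n p : prime p -> 0 < qq n p.
Proof. by move=> pp; rewrite /qq expn_gt0 prime_gt0. Qed.

Lemma qq_inj n p r : prime p -> prime r -> qq n p = qq n r -> p = r.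
Proof.
move=> pp pr E.
have : p %| qq n r by rewrite -E /qq Euclid_dvdX // dvdnn.
by rewrite /qq Euclid_dvdX // dvdn_prime2 // andbT => /eqP.
Qed.

Lemma exists_qq n a : 0 < a -> 0 < n -> ~~ (a %| n) -> exists2 p, prime p & qq n p %| a.
Proof.
move=> a0 n0 nd.
case: (boolP (has (fun p : nat => ~~ (a`_p %| n)) (primes a))) => [/hasP [p pa Hp] | /hasPn H].
  have pp : prime p by move: pa; rewrite mem_primes => /andP[].
  exists p => //.
  move: Hp; rewrite p_part pfactor_dvdn // -ltnNge => Hp.
  by rewrite /qq pfactor_dvdn.
exfalso; move/negP: nd; apply; apply/dvdn_partP => // p pa.
by move/negPn: (H p pa).
Qed.

Lemma nadj_qq n p a b : prime p -> 0 < n -> qq n p %| a -> qq n p %| b -> ~~ (gcdn a b %| n).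
Proof.
move=> pp n0 ha hb; apply/negP => hg.
by move/negP: (@qq_ndvd n p pp n0); apply; apply: dvdn_trans hg; rewrite dvdn_gcd ha hb.
Qed.

Definition Dset n : {set 'I_n.+1} := [set x | (0 < val x) && (val x %| n)].
Definition Pset n : {set 'I_n.+1} := [set x | prime (val x) && (qq n (val x) <= n)].

Lemma upper n (S : {set 'I_n.+1}) : 0 < n -> DClique S -> #|S| <= #|Dset n| + #|Pset n|.
Proof.
move=> n0 HS.
have HS' : forall a, a \in S -> 0 < val a /\ forall b, b \in S -> a != b -> gcdn a b %| n.
  move=> a aS; move/forall_inP: HS => /(_ a aS) /andP[a0 /forall_inP Hb]; split=> // b bS ab.
  exact: (implyP (Hb b bS) ab).
pose f (a : 'I_n.+1) : 'I_n.+1 :=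
  if [pick p : 'I_n.+1 | prime p && (qq n p %| a)] is Some p then p else ord0.
have Hf : forall a, a \in S :\: Dset n -> prime (f a) && (qq n (f a) %| a).
  move=> a; rewrite inE => /andP[aD aS].
  have [a0 _] := HS' a aS.
  have nd : ~~ (val a %| n) by move: aD; rewrite inE a0.
  have [p pp hp] := @exists_qq n (val a) a0 n0 nd.
  rewrite /f; case: pickP => [q // | Hn].
  have pn : p < n.+1.
    apply: leq_ltn_trans (ltn_ord a); apply: leq_trans (@qq_ge n p pp) _; exact: dvdn_leq.
  by move: (Hn (Ordinal pn)); rewrite /= pp hp.
rewrite -(cardsID (Dset n) S) leq_add //.
  apply: subset_leq_card; exact: subsetIr.
rewrite -(@card_in_imset _ _ f).
  apply: subset_leq_card; apply/subsetP => y /imsetP [a aS ->].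
  have /andP[pp hp] := Hf a aS.
  move: aS; rewrite inE => /andP[_ aS]; have [a0 _] := HS' a aS.
  rewrite inE pp /=; apply: leq_trans (dvdn_leq a0 hp) _.
  by rewrite -ltnS ltn_ord.
move=> a b aS bS fab; apply/eqP; apply: contraT => ab.
have /andP[pp ha] := Hf a aS; have /andP[_ hb] := Hf b bS.
rewrite fab in ha pp.
move: aS bS; rewrite !inE => /andP[_ aS] /andP[_ bS].
have [_ H] := HS' a aS.
by have := H b bS ab; rewrite (negbTE (@nadj_qq n _ a b pp n0 ha hb)).
Qed.

Lemma lower n : 0 < n -> exists2 S : {set 'I_n.+1}, DClique S & #|S| = #|Dset n| + #|Pset n|.
Proof.
move=> n0.
pose qo (p : 'I_n.+1) : 'I_n.+1 := inord (qq n p).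
have qoP : forall p, p \in Pset n -> [/\ prime p, val (qo p) = qq n p & qq n p <= n].
  move=> p; rewrite inE => /andP[pp pn]; split=> //; exact: inordK.
have mem : forall x, x \in Dset n :|: [set qo p | p in Pset n] ->
    (0 < val x /\ val x %| n) \/ exists2 p : 'I_n.+1, prime p & val x = qq n p.
  move=> x /setUP [|/imsetP [p pP ->]].
    by rewrite inE => /andP[]; left.
  by have [pp -> _] := qoP p pP; right; exists p.
exists (Dset n :|: [set qo p | p in Pset n]).
  apply/forall_inP => a aS; have Ha := mem a aS; apply/andP; split.
    case: Ha => [[] // | [p pp ->]]; exact: qq_gt0.
  apply/forall_inP => b bS; apply/implyP => ab; have Hb := mem b bS; rewrite /Dadj.
  case: Ha => [[_ ad]|[p pp ap]]; first exact: dvdn_trans (dvdn_gcdl _ _) ad.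
  case: Hb => [[_ bd]|[r pr br]]; first exact: dvdn_trans (dvdn_gcdr _ _) bd.
  case: (eqVneq (val p) (val r)) => [E|ne].
    by move: ab; rewrite (_ : a = b) ?eqxx //; apply: val_inj; rewrite ap br E.
  have : coprime (qq n p) (qq n r).
    by rewrite /qq coprimeXl // coprimeXr // prime_coprime // dvdn_prime2.
  by rewrite ap br /coprime => /eqP ->; exact: dvd1n.
rewrite cardsU.
have -> : Dset n :&: [set qo p | p in Pset n] = set0.
  apply/setP => x; rewrite inE in_set0; apply/negP => /andP[xD /imsetP[p pP E]].
  have [pp qv _] := qoP p pP.
  move: xD; rewrite inE E qv => /andP[_].
  by rewrite (negbTE (@qq_ndvd n p pp n0)).
rewrite cards0 subn0 card_in_imset //.
move=> p r pP rP E; apply: val_inj.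
have [pp qp _] := qoP p pP; have [pr qr _] := qoP r rP.
by apply: (@qq_inj n) => //; rewrite -qp -qr E.
Qed.

Lemma Cl_eq n : 0 < n -> Cl n = #|Dset n| + #|Pset n|.
Proof.
move=> n0; apply/eqP; rewrite eqn_leq; apply/andP; split.
  by apply/bigmax_leqP => S HS; exact: upper.
by have [S HS <-] := @lower n n0; exact: leq_bigmax_cond.
Qed.

Lemma tau_eq n : 0 < n -> tau n = #|Dset n|.
Proof.
move=> n0; rewrite (card_ordP n.+1 (fun d => (0 < d) && (d %| n))).
apply: count_perm; [exact: divisors_uniq | exact: iota_uniq |] => x.
rewrite -dvdn_divisors // mem_iota; case: (boolP (x %| n)) => h.
  by rewrite /= add0n ltnS (dvdn_gt0 n0 h) (dvdn_leq n0 h).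
by rewrite andbF.
Qed.

Lemma omega_eq n : 0 < n -> omega n = count (fun p => prime p && (p %| n)) (iota 0 n.+1).
Proof.
move=> n0; apply: count_perm; [exact: primes_uniq | exact: iota_uniq |] => x.
rewrite mem_primes n0 mem_iota; case: (boolP (x %| n)) => h.
  by rewrite /= add0n ltnS (dvdn_leq n0 h) !andbT.
by rewrite !andbF.
Qed.

Lemma gamma_eq n : 0 < n ->
  gamma 1 n = count (fun p => (prime p && (p %| n)) && (qq n p < n)) (iota 0 n.+1).
Proof.
move=> n0; rewrite /gamma undup_id; last first.
  rewrite map_inj_in_uniq ?filter_uniq ?primes_uniq //.
  move=> x y; rewrite !mem_filter !mem_primes => /andP[_ /andP[px _]] /andP[_ /andP[py _]].
  exact: (@qq_inj n).
rewrite size_map; apply: count_perm; [by rewrite filter_uniq ?primes_uniq | exact: iota_uniq |].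
move=> x; rewrite mem_filter mem_primes n0 mem_iota.
case: (boolP (prime x)) => px /=; last by rewrite andbF.
case: (boolP (x %| n)) => h /=; last by rewrite !andbF.
have := leq_trans (prime_gt1 px) (@qq_ge n x px); rewrite /vacute -/(qq n x) add0n ltnS (dvdn_leq n0 h).
by move=> ->.
Qed.

Lemma P_eq n : 0 < n -> #|Pset n| = prime_pi n - omega n + gamma 1 n.
Proof.
move=> n0; rewrite (card_ordP n.+1 (fun p => prime p && (qq n p <= n))).
rewrite omega_eq // gamma_eq // /prime_pi (@count_split _ prime (fun p => p %| n)).
rewrite (@count_split _ (fun p => prime p && (qq n p <= n)) (fun p => p %| n)).
have -> : count (fun x => prime x && (qq n x <= n) && ~~ (x %| n)) (iota 0 n.+1)
       = count (fun x => prime x && ~~ (x %| n)) (iota 0 n.+1).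
  apply: eq_in_count => x; rewrite mem_iota add0n ltnS => /andP[_ xn].
  case: (boolP (x %| n)) => h; first by rewrite !andbF.
  have : logn x n = 0.
    by apply/eqP; rewrite -leqn0 leqNgt logn_gt0 mem_primes; case: (x %| n) h; rewrite ?andbF.
  by move=> L; rewrite /qq L expn1 xn /= !andbT.
have -> : count (fun x => prime x && (qq n x <= n) && (x %| n)) (iota 0 n.+1)
       = count (fun x => prime x && (x %| n) && (qq n x < n)) (iota 0 n.+1).
  apply: eq_in_count => x _.
  case: (boolP (prime x)) => px //=; case: (boolP (x %| n)) => h /=; rewrite ?andbF //.
  rewrite andbT leq_eqVlt; case: eqP => //= E.
  by move: (@qq_ndvd n x px n0); rewrite E dvdnn.
lia.
Qed.

Theorem mainTheorem8 (n : nat) (hn : 2 <= n) :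
  Cl n = tau n + prime_pi n - omega n + gamma 1 n /\
  (prime n -> Cl n = prime_pi n + 1).
Proof.
have n0 : 0 < n by lia.
have E : Cl n = tau n + prime_pi n - omega n + gamma 1 n.
  rewrite Cl_eq // P_eq // -tau_eq //.
  have : omega n <= prime_pi n.
    rewrite omega_eq // /prime_pi (@count_split _ prime (fun p => p %| n)); lia.
  lia.
split => // pn; rewrite E.
have -> : omega n = 1 by rewrite /omega primes_prime.
have -> : gamma 1 n = 0.
  rewrite /gamma primes_prime //= /vacute logn_prime // eqxx /=.
  have -> : (n ^ 2 < n) = false by apply/negbTE; rewrite -leqNgt expnS expn1; nia.
  by rewrite andbF.
have -> : tau n = 2.
  rewrite /tau (@perm_size _ _ [:: 1; n]) //.
  apply: uniq_perm; [exact: divisors_uniq | by rewrite /= inE; case: eqP => //; lia |].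
  move=> x; rewrite -dvdn_divisors // !inE.
  apply/idP/idP; first by case/primeP: pn => _; apply.
  by case/orP => /eqP ->; rewrite ?dvd1n ?dvdnn.
lia.
Qed.
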